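(* Let $(\mathbf v,p,\varphi,\mu)$ be a sufficiently smooth solution on $\Omega\times(0,T)$, $\Omega\subset\mathbb R^d$, of $$\partial_t(\rho\mathbf v)+\operatorname{div}(\rho\mathbf v\otimes\mathbf v)-\operatorname{div}(2\eta(\varphi)D\mathbf v)+\nabla p=-\operatorname{div}(a(\varphi,\nabla\varphi)\nabla\varphi\otimes\nabla\varphi),\qquad\operatorname{div}\mathbf v=0,$$ $$\partial_t\widehat{\rho c}(\varphi)+\mathbf v\cdot\nabla\widehat{\rho c}(\varphi)=\operatorname{div}(\tilde m(\varphi)\nabla\mu),\qquad \frac{\partial\widehat{\rho c}}{\partial\varphi}\mu=\frac{\partial f}{\partial\varphi}(\varphi,\nabla\varphi)-\operatorname{div}(a(\varphi,\nabla\varphi)\nabla\varphi)-\frac{\partial\rho}{\partial\varphi}\frac{|\mathbf v|^2}{2},$$ where $\rho=\hat\rho(\varphi)$, $\widehat{\rho c}$, $f$ are smooth, $\eta\ge0$, $\tilde m\ge0$, and $a$ satisfies $\frac{\partial f}{\partial\nabla\varphi}(\varphi,\nabla\varphi)=a(\varphi,\nabla\varphi)\nabla\varphi$. Set $e=\hat\rho(\varphi)\frac{|\mathbf v|^2}2+f(\varphi,\nabla\varphi)$, $\mathbf J=-\tilde m(\varphi)\nabla\mu$, $\boldsymbol\xi=\frac{\partial f}{\partial\nabla\varphi}(\varphi,\nabla\varphi)$, $\dot\varphi=\partial_t\varphi+\mathbf v\cdot\nabla\varphi$ and $\mathbf T=2\eta(\varphi)D\mathbf v-\nabla\varphi\otimes\boldsymbol\xi-p\mathbf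 I$. Then the local dissipation identity $$\partial_te+\mathbf v\cdot\nabla e-\operatorname{div}(\mathbf T\mathbf v)-\operatorname{div}(\dot\varphi\,\boldsymbol\xi)+\operatorname{div}(\mu\mathbf J)=-\big(2\eta(\varphi)|D\mathbf v|^2+\tilde m(\varphi)|\nabla\mu|^2\big)\le0$$ holds pointwise.
   Context: $D\mathbf v=\frac12(\nabla\mathbf v+\nabla\mathbf v^T)$; $\mathbf a\otimes\mathbf b=\mathbf a\mathbf b^T$; the divergence of a matrix field is row-wise; $\mathbf T\mathbf v$ is the matrix–vector product with $\mathbf T$ symmetric. Here $\varphi$ is an order parameter for a mixture of two incompressible fluids, $\hat\rho(\varphi)$ the total mass density and $\widehat{\rho c}(\varphi)$ the difference of the partial mass densities, both expressed as functions of $\varphi$; $\frac{\partial f}{\partial\varphi}$, $\frac{\partial f}{\partial\nabla\varphi}$ are partial derivatives of $f(z,\mathbf p)$ in $z$ and $\mathbf p$. *)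

(* Defs.v *)
From Stdlib Require Import Reals ClassicalEpsilon.
From mathcomp Require Import ssreflect ssrfun ssrbool eqtype ssrnat fintype bigop.

Set Implicit Arguments.
Unset Strict Implicit.

Local Open Scope R_scope.

(* points of R^d and space-time fields on R^d x R *)
Definition Vec (d : nat) := 'I_d -> R.
Definition Fld (d : nat) := Vec d -> R -> R.

Definition sumI (d : nat) (F : 'I_d -> R) : R := \big[Rplus/R0]_(i < d) F i.

(* derivative of a real function of one variable (0 if it does not exist;
   only used at points where it exists by the smoothness hypotheses) *)
Definition deriv (g : R -> R) (s : R) : R :=
  match excluded_middle_informative (exists l, derivable_pt_lim g s l) with
  | left H => proj1_sig (constructive_indefinite_description _ H)
  | right _ => 0
  end.

Definition upd (d : nat) (x : Vec d) (i : 'I_d) (s : R) : Vec d :=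
  fun j => if j == i then s else x j.

Definition dx (d : nat) (i : 'I_d) (F : Fld d) : Fld d :=
  fun x t => deriv (fun s => F (upd x i s) t) (x i).
Definition dt (d : nat) (F : Fld d) : Fld d :=
  fun x t => deriv (fun s => F x s) t.

Definition is_open (d : nat) (O : Vec d -> Prop) : Prop :=
  forall x, O x -> exists delta, 0 < delta /\
    forall y : Vec d, (forall i, Rabs (y i - x i) < delta) -> O y.

Definition cont_on (d : nat) (U : Vec d -> R -> Prop) (F : Fld d) : Prop :=
  forall x t, U x t -> forall eps, 0 < eps -> exists delta, 0 < delta /\
    forall y s, U y s -> (forall i, Rabs (y i - x i) < delta) ->
      Rabs (s - t) < delta -> Rabs (F y s - F x t) < eps.

Definition partials_exist_on (d : nat) (U : Vec d -> R -> Prop) (F : Fld d) : Prop :=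
  forall x t, U x t ->
    (forall i, exists l, derivable_pt_lim (fun s => F (upd x i s) t) (x i) l) /\
    (exists l, derivable_pt_lim (fun s => F x s) t l).

Fixpoint C_on (d : nat) (U : Vec d -> R -> Prop) (k : nat) (F : Fld d) {struct k} : Prop :=
  match k with
  | O => cont_on U F
  | S k' => cont_on U F /\ partials_exist_on U F /\
            (forall i, C_on U k' (dx i F)) /\ C_on U k' (dt F)
  end.

Fixpoint CR (k : nat) (g : R -> R) {struct k} : Prop :=
  match k with
  | O => continuity g
  | S k' => continuity g /\ (forall z, exists l, derivable_pt_lim g z l) /\ CR k' (deriv g)
  end.
Definition smoothR (g : R -> R) : Prop := forall k, CR k g.

Definition smoothf (d : nat) (f : R -> Vec d -> R) : Prop :=
  forall k, C_on (fun _ _ => True) k (fun p z => f z p).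
Definition df_dz (d : nat) (f : R -> Vec d -> R) (z : R) (p : Vec d) : R :=
  deriv (fun s => f s p) z.
Definition df_dp (d : nat) (f : R -> Vec d -> R) (i : 'I_d) (z : R) (p : Vec d) : R :=
  deriv (fun s => f z (upd p i s)) (p i).

Definition grad (d : nat) (F : Fld d) : 'I_d -> Fld d := fun i => dx i F.
Definition gradAt (d : nat) (F : Fld d) (x : Vec d) (t : R) : Vec d :=
  fun i => dx i F x t.
(* D v = (grad v + grad v^T)/2, (grad v)_{ij} = d_j v_i *)
Definition symgrad (d : nat) (v : 'I_d -> Fld d) : 'I_d -> 'I_d -> Fld d :=
  fun i j x t => (dx j (v i) x t + dx i (v j) x t) / 2.
Definition divV (d : nat) (w : 'I_d -> Fld d) : Fld d :=
  fun x t => sumI (fun j => dx j (w j) x t).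
Definition divM (d : nat) (M : 'I_d -> 'I_d -> Fld d) : 'I_d -> Fld d :=
  fun i x t => sumI (fun j => dx j (M i j) x t).
Definition adv (d : nat) (v : 'I_d -> Fld d) (F : Fld d) : Fld d :=
  fun x t => sumI (fun i => v i x t * dx i F x t).
Definition tens (d : nat) (a b : 'I_d -> Fld d) : 'I_d -> 'I_d -> Fld d :=
  fun i j x t => a i x t * b j x t.
Definition matvec (d : nat) (M : 'I_d -> 'I_d -> Fld d) (w : 'I_d -> Fld d) : 'I_d -> Fld d :=
  fun i x t => sumI (fun j => M i j x t * w j x t).
Definition sqnormV (d : nat) (w : 'I_d -> Fld d) : Fld d :=
  fun x t => sumI (fun i => (w i x t) ^ 2).
Definition sqnormM (d : nat) (M : 'I_d -> 'I_d -> Fld d) : Fld d :=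
  fun x t => sumI (fun i => sumI (fun j => (M i j x t) ^ 2)).
Definition idM (d : nat) (q : Fld d) : 'I_d -> 'I_d -> Fld d :=
  fun i j x t => if i == j then q x t else 0.
Definition compF (d : nat) (g : R -> R) (F : Fld d) : Fld d := fun x t => g (F x t).

Section Quantities.
Variables (d : nat) (rhoh rhoc eta m : R -> R) (f a : R -> Vec d -> R)
          (v : 'I_d -> Fld d) (p phi mu : Fld d).

Definition a_phi : Fld d := fun x t => a (phi x t) (gradAt phi x t).
Definition xi : 'I_d -> Fld d := fun i x t => df_dp f i (phi x t) (gradAt phi x t).
Definition energy : Fld d :=
  fun x t => rhoh (phi x t) * sqnormV v x t / 2 + f (phi x t) (gradAt phi x t).
Definition flux : 'I_d -> Fld d := fun i x t => - (m (phi x t) * dx i mu x t).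
Definition phidot : Fld d := fun x t => dt phi x t + adv v phi x t.
Definition stress : 'I_d -> 'I_d -> Fld d :=
  fun i j x t => 2 * eta (phi x t) * symgrad v i j x t
                 - tens (grad phi) xi i j x t - idM p i j x t.

Definition momentum_eq (x : Vec d) (t : R) : Prop :=
  forall i,
    dt (fun y s => rhoh (phi y s) * v i y s) x t
    + divM (fun k j y s => rhoh (phi y s) * v k y s * v j y s) i x t
    - divM (fun k j y s => 2 * eta (phi y s) * symgrad v k j y s) i x t
    + dx i p x t
    = - divM (fun k j y s => a_phi y s * (dx k phi y s * dx j phi y s)) i x t.
Definition incompressible (x : Vec d) (t : R) : Prop := divV v x t = 0.
Definition phase_eq (x : Vec d) (t : R) : Prop :=
  dt (compF rhoc phi) x t + adv v (compF rhoc phi) x t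
  = divV (fun i y s => m (phi y s) * dx i mu y s) x t.
Definition chem_pot_eq (x : Vec d) (t : R) : Prop :=
  deriv rhoc (phi x t) * mu x t
  = df_dz f (phi x t) (gradAt phi x t)
    - divV (fun i y s => a_phi y s * dx i phi y s) x t
    - deriv rhoh (phi x t) * sqnormV v x t / 2.
Definition a_relation (x : Vec d) (t : R) : Prop :=
  forall i, xi i x t = a_phi x t * dx i phi x t.

Definition dissip_lhs (x : Vec d) (t : R) : R :=
  dt energy x t + adv v energy x t
  - divV (matvec stress v) x t
  - divV (fun i y s => phidot y s * xi i y s) x t
  + divV (fun i y s => mu y s * flux i y s) x t.
Definition dissip_rate (x : Vec d) (t : R) : R :=
  2 * eta (phi x t) * sqnormM (symgrad v) x t + m (phi x t) * sqnormV (grad mu) x t.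
End Quantities.

(* Main.v *)
Require Import Defs.
From HB Require Import structures.
From Stdlib Require Import Reals Lra ClassicalEpsilon FunctionalExtensionality.
From mathcomp Require Import ssreflect ssrfun ssrbool eqtype ssrnat seq fintype bigop.
Local Open Scope R_scope.
Set Implicit Arguments.
Unset Strict Implicit.

Lemma RplusA : associative Rplus. Proof. move=> *; ring. Qed.
Lemma RplusC : commutative Rplus. Proof. move=> *; ring. Qed.
Lemma Rplus0m : left_id R0 Rplus. Proof. move=> *; ring. Qed.
Lemma RmultDl : left_distributive Rmult Rplus. Proof. move=> *; ring. Qed.
Lemma RmultDr : right_distributive Rmult Rplus. Proof. move=> *; ring. Qed.
Lemma Rmult0m : left_zero R0 Rmult. Proof. move=> *; ring. Qed.
Lemma Rmultm0 : right_zero R0 Rmult. Proof. move=> *; ring. Qed.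
HB.instance Definition _ := Monoid.isComLaw.Build R R0 Rplus RplusA RplusC Rplus0m.
HB.instance Definition _ := Monoid.isMulLaw.Build R R0 Rmult Rmult0m Rmultm0.
HB.instance Definition _ := Monoid.isAddLaw.Build R Rmult Rplus RmultDl RmultDr.

Lemma deriv_ok g s l : derivable_pt_lim g s l -> deriv g s = l.
Proof.
move=> H; rewrite /deriv; case: excluded_middle_informative => [e|n].
- case: constructive_indefinite_description => l' H' /=.
  exact: (uniqueness_limite _ _ _ _ H' H).
- by exfalso; apply: n; exists l.
Qed.

Arguments deriv_ok {g s l}.
Lemma deriv_ex g s : (exists l, derivable_pt_lim g s l) -> derivable_pt_lim g s (deriv g s).
Proof. by case=> l H; rewrite (deriv_ok H). Qed.

Lemma sumI_split d (F G : 'I_d -> R) : sumI (fun i => F i + G i) = sumI F + sumI G.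
Proof. by rewrite /sumI big_split. Qed.
Lemma sumI_ext d (F G : 'I_d -> R) : (forall i, F i = G i) -> sumI F = sumI G.
Proof. by move=> H; rewrite /sumI; apply: eq_bigr => i _. Qed.
Lemma sumI_scal d c (F : 'I_d -> R) : sumI (fun i => c * F i) = c * sumI F.
Proof. by rewrite /sumI big_distrr. Qed.
Lemma sumI_scalr d c (F : 'I_d -> R) : sumI (fun i => F i * c) = sumI F * c.
Proof. by rewrite /sumI big_distrl. Qed.
Lemma sumI_0 d : sumI (fun _ : 'I_d => 0) = 0.
Proof. by rewrite /sumI big1. Qed.
Lemma sumI_opp d (F : 'I_d -> R) : sumI (fun i => - F i) = - sumI F.
Proof.
have -> : (fun i => - F i) = (fun i => (-1) * F i) by apply: functional_extensionality=> i; ring.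
rewrite sumI_scal; ring.
Qed.
Lemma sumI_minus d (F G : 'I_d -> R) : sumI (fun i => F i - G i) = sumI F - sumI G.
Proof. rewrite /Rminus sumI_split sumI_opp //. Qed.
Lemma sumI_swap d (F : 'I_d -> 'I_d -> R) :
  sumI (fun i => sumI (fun j => F i j)) = sumI (fun j => sumI (fun i => F i j)).
Proof. by rewrite /sumI exchange_big. Qed.
Lemma sumI_delta d (F : 'I_d -> R) i :
  sumI (fun j => if i == j then F j else 0) = F i.
Proof.
rewrite /sumI (bigD1 i) //= eqxx big1 ?Rplus_0_r // => j /negbTE.
by rewrite eq_sym => ->.
Qed.
Lemma sumI_delta' d (F : 'I_d -> R) i :
  sumI (fun j => if j == i then F j else 0) = F i.
Proof.
rewrite -(sumI_delta F i); apply: sumI_ext=> j; by rewrite eq_sym.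
Qed.

Lemma sumI_abs d (F : 'I_d -> R) : Rabs (sumI F) <= sumI (fun i => Rabs (F i)).
Proof.
rewrite /sumI; elim/big_rec2: _ => [|i y1 y2 _ H].
- rewrite Rabs_R0; lra.
- apply: Rle_trans (Rabs_triang _ _) _; lra.
Qed.
Lemma sumI_le d (F G : 'I_d -> R) : (forall i, F i <= G i) -> sumI F <= sumI G.
Proof.
move=> H; rewrite /sumI; elim/big_rec2: _ => [|i y1 y2 _ H']; first lra.
have := H i; lra.
Qed.
Lemma sumI_nonneg d (F : 'I_d -> R) : (forall i, 0 <= F i) -> 0 <= sumI F.
Proof. move=> H; rewrite -(sumI_0 d); exact: sumI_le. Qed.

Lemma telescope (g : nat -> R) n :
  \big[Rplus/R0]_(k < n) (g k.+1 - g k) = g n - g O.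
Proof.
elim: n => [|n IH]; first by rewrite big_ord0; ring.
rewrite big_ord_recr /= IH; ring.
Qed.

Lemma fin_delta d (P : 'I_d -> R -> Prop) :
  (forall k del del', P k del -> 0 < del' -> del' <= del -> P k del') ->
  (forall k, exists del, 0 < del /\ P k del) ->
  exists del, 0 < del /\ forall k, P k del.
Proof.
move=> Hm H.
pose dl k := proj1_sig (constructive_indefinite_description _ (H k)).
have Hdl : forall k, 0 < dl k /\ P k (dl k).
  by move=> k; rewrite /dl; case: constructive_indefinite_description.
pose m := \big[Rmin/1]_(k <- index_enum 'I_d) dl k.
have mpos : 0 < m.
  rewrite /m; elim: (index_enum _) => [|a s IH]; rewrite ?big_nil ?big_cons; first lra.
  apply: Rmin_glb_lt => //; exact: (proj1 (Hdl a)).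
have mle : forall k, m <= dl k.
  move=> k; rewrite /m; have := mem_index_enum k.
  elim: (index_enum _) => [|a s IH] //; rewrite big_cons in_cons.
  case/orP => [/eqP ->|/IH]; first by apply: Rmin_l.
  move=> h; apply: Rle_trans h; exact: Rmin_r.
exists m; split=> // k; apply: (Hm k (dl k)) => //; exact: (proj2 (Hdl k)).
Qed.



Lemma dpl_eq (f g : R -> R) s l l' : (forall y, f y = g y) -> l = l' ->
  derivable_pt_lim f s l -> derivable_pt_lim g s l'.
Proof. by move=> /functional_extensionality -> ->. Qed.

Lemma dpl_mult f1 f2 s l1 l2 : derivable_pt_lim f1 s l1 -> derivable_pt_lim f2 s l2 ->
  derivable_pt_lim (fun y => f1 y * f2 y) s (l1 * f2 s + f1 s * l2).
Proof. move=> H1 H2; exact: (derivable_pt_lim_mult f1 f2 s l1 l2 H1 H2). Qed.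
Lemma dpl_plus f1 f2 s l1 l2 : derivable_pt_lim f1 s l1 -> derivable_pt_lim f2 s l2 ->
  derivable_pt_lim (fun y => f1 y + f2 y) s (l1 + l2).
Proof. move=> H1 H2; exact: (derivable_pt_lim_plus f1 f2 s l1 l2 H1 H2). Qed.
Lemma dpl_minus f1 f2 s l1 l2 : derivable_pt_lim f1 s l1 -> derivable_pt_lim f2 s l2 ->
  derivable_pt_lim (fun y => f1 y - f2 y) s (l1 - l2).
Proof. move=> H1 H2; exact: (derivable_pt_lim_minus f1 f2 s l1 l2 H1 H2). Qed.
Lemma dpl_opp f1 s l1 : derivable_pt_lim f1 s l1 ->
  derivable_pt_lim (fun y => - f1 y) s (- l1).
Proof. move=> H1; exact: (derivable_pt_lim_opp f1 s l1 H1). Qed.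
Lemma dpl_const c s : derivable_pt_lim (fun _ => c) s 0.
Proof. exact: (derivable_pt_lim_const c s). Qed.
Lemma dpl_comp (g : R -> R) f s l : (forall z, exists l, derivable_pt_lim g z l) ->
  derivable_pt_lim f s l -> derivable_pt_lim (fun y => g (f y)) s (deriv g (f s) * l).
Proof.
move=> Hg H; apply: (derivable_pt_lim_comp f g s l (deriv g (f s)) H).
exact: deriv_ex.
Qed.
Lemma dpl_sq f s l : derivable_pt_lim f s l ->
  derivable_pt_lim (fun y => (f y) ^ 2) s (2 * f s * l).
Proof.
move=> H; apply: dpl_eq (dpl_mult H H) => [y|]; simpl; ring.
Qed.
Lemma dpl_sum n (F : 'I_n -> R -> R) (l : 'I_n -> R) s :
  (forall i, derivable_pt_lim (F i) s (l i)) ->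
  derivable_pt_lim (fun y => sumI (fun i => F i y)) s (sumI l).
Proof.
elim: n F l => [|n IH] F l H.
- apply: dpl_eq (dpl_const 0 s) => [y|]; by rewrite /sumI big_ord0.
- have H1 := IH (fun i => F (widen_ord (leqnSn n) i)) (fun i => l (widen_ord (leqnSn n) i)) (fun i => H _).
  have := dpl_plus H1 (H ord_max).
  apply: dpl_eq => [y|]; by rewrite /sumI big_ord_recr.
Qed.

Section Lines.
Variable d : nat.
Definition lin (x : Vec d) (o : option 'I_d) (s : R) : Vec d :=
  match o with Some j => upd x j s | None => x end.
Definition lint (t : R) (o : option 'I_d) (s : R) : R :=
  match o with Some _ => t | None => s end.
Definition bs (x : Vec d) t (o : option 'I_d) : R :=
  match o with Some j => x j | None => t end.
Definition DL o (F : Fld d) x t l :=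
  derivable_pt_lim (fun s => F (lin x o s) (lint t o s)) (bs x t o) l.
Definition Dd o (F : Fld d) x t := deriv (fun s => F (lin x o s) (lint t o s)) (bs x t o).

Lemma upd_same (x : Vec d) j : upd x j (x j) = x.
Proof. apply: functional_extensionality => i; rewrite /upd; by case: eqP => [->|]. Qed.
Lemma upd_upd (x : Vec d) j s s' : upd (upd x j s) j s' = upd x j s'.
Proof. apply: functional_extensionality => i; rewrite /upd; by case: eqP. Qed.
Lemma upd_at (x : Vec d) j s : upd x j s j = s.
Proof. by rewrite /upd eqxx. Qed.

Lemma lin_base x t o : lin x o (bs x t o) = x.
Proof. case: o => //= j; exact: upd_same. Qed.
Lemma lint_base x t o : lint t o (bs x t o) = t.
Proof. by case: o. Qed.

Lemma DL_Dd o F x t l : DL o F x t l -> Dd o F x t = l.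
Proof. exact: deriv_ok. Qed.
Lemma DL_ex o F x t : (exists l, DL o F x t l) -> DL o F x t (Dd o F x t).
Proof. exact: deriv_ex. Qed.

Lemma DL_mult o F G x t l1 l2 : DL o F x t l1 -> DL o G x t l2 ->
  DL o (fun y s => F y s * G y s) x t (l1 * G x t + F x t * l2).
Proof. move=> H1 H2; have := dpl_mult H1 H2; by rewrite lin_base lint_base. Qed.
Lemma DL_plus o F G x t l1 l2 : DL o F x t l1 -> DL o G x t l2 ->
  DL o (fun y s => F y s + G y s) x t (l1 + l2).
Proof. move=> H1 H2; exact: dpl_plus H1 H2. Qed.
Lemma DL_minus o F G x t l1 l2 : DL o F x t l1 -> DL o G x t l2 ->
  DL o (fun y s => F y s - G y s) x t (l1 - l2).
Proof. move=> H1 H2; exact: dpl_minus H1 H2. Qed.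
Lemma DL_opp o F x t l1 : DL o F x t l1 -> DL o (fun y s => - F y s) x t (- l1).
Proof. move=> H1; exact: dpl_opp H1. Qed.
Lemma DL_const o c x t : DL o (fun _ _ => c) x t 0.
Proof. exact: dpl_const. Qed.
Lemma DL_comp o (g : R -> R) F x t l : (forall z, exists l, derivable_pt_lim g z l) ->
  DL o F x t l -> DL o (fun y s => g (F y s)) x t (deriv g (F x t) * l).
Proof. move=> Hg H; have := dpl_comp Hg H; by rewrite lin_base lint_base. Qed.
Lemma DL_sq o F x t l : DL o F x t l -> DL o (fun y s => (F y s) ^ 2) x t (2 * F x t * l).
Proof. move=> H; have := dpl_sq H; by rewrite lin_base lint_base. Qed.
Lemma DL_sum o (F : 'I_d -> Fld d) x t (l : 'I_d -> R) :
  (forall i, DL o (F i) x t (l i)) -> DL o (fun y s => sumI (fun i => F i y s)) x t (sumI l).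
Proof. move=> H; exact: (dpl_sum (F := fun i s => F i (lin x o s) (lint t o s))). Qed.
Lemma DL_ext o F G x t l : (forall y s, F y s = G y s) -> DL o F x t l -> DL o G x t l.
Proof. by move=> H; apply: dpl_eq. Qed.
Lemma DL_val o F x t l l' : l = l' -> DL o F x t l -> DL o F x t l'.
Proof. by move=> ->. Qed.

Lemma DL_C (U : Vec d -> R -> Prop) k F x t o : C_on U k.+1 F -> U x t -> DL o F x t (Dd o F x t).
Proof.
move=> [_ [HP _]] Hu; apply: DL_ex; case: (HP x t Hu) => Hs Ht.
case: o => [j|] //=; exact: Hs.
Qed.
End Lines.



Lemma mvt_any (f f' : R -> R) a b : (forall c, derivable_pt_lim f c (f' c)) ->
  exists c, f b - f a = f' c * (b - a) /\ Rabs (c - a) <= Rabs (b - a).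
Proof.
move=> H; case: (Rtotal_order a b) => [ab|[ab|ab]].
- have [c [E Hc]] := MVT_cor2 f f' a b ab (fun c _ => H c).
  exists c; split=> //; rewrite !Rabs_right; lra.
- subst; exists b; split; first ring. rewrite Rminus_diag Rabs_R0; lra.
- have [c [E Hc]] := MVT_cor2 f f' b a ab (fun c _ => H c).
  exists c; split; first lra.
  rewrite (Rabs_left (b - a)); last lra.
  rewrite Rabs_left; lra.
Qed.

Definition TT d : Vec d -> R -> Prop := fun _ _ => True.

Section Chain.
Variable d : nat.
Variable G : Fld d.
Hypothesis HG : C_on (@TT d) 1 G.

Lemma G_dx q w k : derivable_pt_lim (fun s => G (upd q k s) w) (q k) (dx k G q w).
Proof. case: HG => _ [HP _]; apply: deriv_ex; exact: (proj1 (HP q w I) k). Qed.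
Lemma G_dx' q w k c : derivable_pt_lim (fun s => G (upd q k s) w) c (dx k G (upd q k c) w).
Proof.
have := G_dx (upd q k c) w k; rewrite upd_at.
apply: dpl_eq => // y; by rewrite upd_upd.
Qed.
Lemma G_dt q w : derivable_pt_lim (fun s => G q s) w (dt G q w).
Proof. case: HG => _ [HP _]; apply: deriv_ex; exact: (proj2 (HP q w I)). Qed.

Definition interp (q p0 : Vec d) (n : nat) : Vec d :=
  fun j => if (j < n)%N then q j else p0 j.

Lemma frechet p0 z0 eps : 0 < eps -> exists del, 0 < del /\
  forall q w, (forall k, Rabs (q k - p0 k) < del) -> Rabs (w - z0) < del ->
  Rabs (G q w - G p0 z0 - (sumI (fun k => dx k G p0 z0 * (q k - p0 k)) + dt G p0 z0 * (w - z0)))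
   <= eps * (sumI (fun k => Rabs (q k - p0 k)) + Rabs (w - z0)).
Proof.
move=> He.
case: HG => _ [_ [Hx Ht]].
have [dt0 [Hdt0 Cdt]] := Ht p0 z0 I eps He.
have [dx0 [Hdx0 Cdx]] : exists del, 0 < del /\ forall k, forall y s,
   (forall i, Rabs (y i - p0 i) < del) -> Rabs (s - z0) < del ->
   Rabs (dx k G y s - dx k G p0 z0) < eps.
  apply: fin_delta.
  - move=> k del del' H Hp Hle y s Hy Hs; apply: H; last lra.
    move=> i; have := Hy i; lra.
  - move=> k; have [del [Hd H]] := Hx k p0 z0 I eps He.
    exists del; split=> // y s Hy Hs; exact: H.
exists (Rmin dt0 dx0); split; first by apply: Rmin_glb_lt.
move=> q w Hq Hw.
have Hm1 := Rmin_l dt0 dx0; have Hm2 := Rmin_r dt0 dx0.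
have [c [Ec Hc]] := @mvt_any (fun s => G q s) (fun s => dt G q s) z0 w (G_dt q).
have Et : Rabs (G q w - G q z0 - dt G p0 z0 * (w - z0)) <= eps * Rabs (w - z0).
  rewrite Ec -Rmult_minus_distr_r Rabs_mult.
  apply: Rmult_le_compat_r; first exact: Rabs_pos.
  apply: Rlt_le; apply: Cdt => // [i|]; first by have := Hq i; lra.
  lra.
have Tel : G q z0 - G p0 z0 = sumI (fun k : 'I_d => G (interp q p0 k.+1) z0 - G (interp q p0 k) z0).
  rewrite /sumI (telescope (fun n => G (interp q p0 n) z0) d).
  have -> : interp q p0 d = q.
    by apply: functional_extensionality => j; rewrite /interp ltn_ord.
  have -> : interp q p0 0 = p0 by apply: functional_extensionality => j.
  done.
have Ek : forall k : 'I_d, Rabs (G (interp q p0 k.+1) z0 - G (interp q p0 k) z0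
     - dx k G p0 z0 * (q k - p0 k)) <= eps * Rabs (q k - p0 k).
  move=> k.
  have E1 : interp q p0 k.+1 = upd (interp q p0 k) k (q k).
    apply: functional_extensionality => j; rewrite /interp /upd.
    case: (eqVneq j k) => [->|ne]; first by rewrite ltnSn.
    rewrite ltnS leq_eqVlt.
    have -> : (nat_of_ord j == nat_of_ord k) = false.
      apply/negbTE; apply/eqP => h; move/eqP: ne; apply; exact: ord_inj.
    done.
  have E2 : interp q p0 k = upd (interp q p0 k) k (p0 k).
    apply: functional_extensionality => j; rewrite /interp /upd.
    case: eqP => [->|]; by rewrite ?ltnn.
  rewrite E1 {2}E2.
  have [c' [Ec' Hc']] := @mvt_any _ _ (p0 k) (q k) (G_dx' (interp q p0 k) z0 k).
  rewrite Ec' -Rmult_minus_distr_r Rabs_mult.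
  apply: Rmult_le_compat_r; first exact: Rabs_pos.
  apply: Rlt_le; apply: Cdx; last by rewrite Rminus_diag Rabs_R0; lra.
  move=> i; rewrite /upd; case: eqP => [->|_].
    have := Hq k; lra.
  rewrite /interp; case: (i < k)%N; last by rewrite Rminus_diag Rabs_R0; lra.
  have := Hq i; lra.
have -> : G q w - G p0 z0 - (sumI (fun k => dx k G p0 z0 * (q k - p0 k)) + dt G p0 z0 * (w - z0))
  = (G q w - G q z0 - dt G p0 z0 * (w - z0)) +
    sumI (fun k : 'I_d => G (interp q p0 k.+1) z0 - G (interp q p0 k) z0
     - dx k G p0 z0 * (q k - p0 k)).
  rewrite sumI_minus -Tel; ring.
apply: Rle_trans (Rabs_triang _ _) _.
have : Rabs (sumI (fun k : 'I_d => G (interp q p0 k.+1) z0 - G (interp q p0 k) z0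
     - dx k G p0 z0 * (q k - p0 k))) <= eps * sumI (fun k => Rabs (q k - p0 k)).
  apply: Rle_trans (sumI_abs _) _; rewrite -sumI_scal; exact: sumI_le.
lra.
Qed.


Lemma chain (c : 'I_d -> R -> R) (z : R -> R) s0 (lc : 'I_d -> R) lz :
  (forall k, derivable_pt_lim (c k) s0 (lc k)) -> derivable_pt_lim z s0 lz ->
  derivable_pt_lim (fun s => G (fun k => c k s) (z s)) s0
    (sumI (fun k => dx k G (fun k => c k s0) (z s0) * lc k)
     + dt G (fun k => c k s0) (z s0) * lz).
Proof.
move=> Hc Hz eps He.
set p0 := fun k => c k s0; set z0 := z s0.
set A := fun k => dx k G p0 z0; set B := dt G p0 z0.
set K := sumI (fun k => Rabs (A k)) + Rabs B + 1.
set Bc := sumI (fun k => Rabs (lc k) + 1) + Rabs lz + 1.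
have HK : 1 <= K.
  have := sumI_nonneg (fun k => Rabs_pos (A k)); have := Rabs_pos B; rewrite /K; lra.
have HBc : 1 <= Bc.
  have : 0 <= sumI (fun k => Rabs (lc k) + 1).
    apply: sumI_nonneg => k; have := Rabs_pos (lc k); lra.
  have := Rabs_pos lz; rewrite /Bc; lra.
have He1 : 0 < eps / (2 * Bc) by apply: Rdiv_lt_0_compat; lra.
have [del1 [Hdel1 Fr]] := frechet p0 z0 He1.
set e2 := Rmin 1 (eps / (2 * K)).
have He2 : 0 < e2 by apply: Rmin_glb_lt; [lra | apply: Rdiv_lt_0_compat; lra].
have quot : forall (g : R -> R) l, derivable_pt_lim g s0 l -> exists del, 0 < del /\
   forall h, h <> 0 -> Rabs h < del ->
     Rabs ((g (s0 + h) - g s0) / h - l) < e2 /\ Rabs (g (s0 + h) - g s0) < del1.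
  move=> g l Hg; have [del Hdel] := Hg e2 He2.
  have Hp : 0 < del1 / (Rabs l + 1) by apply: Rdiv_lt_0_compat; have := Rabs_pos l; lra.
  exists (Rmin del (del1 / (Rabs l + 1))); split.
    apply: Rmin_glb_lt => //; exact: cond_pos.
  move=> h hn hl; have h1 := Rmin_l del (del1 / (Rabs l + 1)).
  have h2 := Rmin_r del (del1 / (Rabs l + 1)).
  have Q := Hdel h hn ltac:(lra); split => //.
  have -> : g (s0 + h) - g s0 = h * ((g (s0 + h) - g s0) / h) by field.
  rewrite Rabs_mult.
  have Hq : Rabs ((g (s0 + h) - g s0) / h) <= Rabs l + 1.
    have := Rabs_triang_inv ((g (s0 + h) - g s0) / h) l.
    have := Rmin_l 1 (eps / (2 * K)); rewrite -/e2; lra.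
  have Hl : 0 < Rabs l + 1 by have := Rabs_pos l; lra.
  have : Rabs h * (Rabs l + 1) < del1.
    have : Rabs h < del1 / (Rabs l + 1) by lra.
    move=> H; have := Rmult_lt_compat_r _ _ _ Hl H.
    by rewrite /Rdiv Rmult_assoc Rinv_l ?Rmult_1_r; lra.
  have := Rabs_pos h; have := Rabs_pos ((g (s0 + h) - g s0) / h); nra.
have [dc [Hdc Pc]] : exists del, 0 < del /\ forall k h, h <> 0 -> Rabs h < del ->
     Rabs ((c k (s0 + h) - c k s0) / h - lc k) < e2 /\ Rabs (c k (s0 + h) - c k s0) < del1.
  apply: (fin_delta (P := fun k del => forall h, h <> 0 -> Rabs h < del ->
     Rabs ((c k (s0 + h) - c k s0) / h - lc k) < e2 /\ Rabs (c k (s0 + h) - c k s0) < del1)).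
  - move=> k del del' H _ Hle h hn hl; apply: H => //; lra.
  - move=> k; exact: quot.
have [dz [Hdz Pz]] := quot z lz Hz.
have Hpos : 0 < Rmin dc dz by apply: Rmin_glb_lt.
exists (mkposreal _ Hpos) => h hn /= hl.
have hl1 := Rmin_l dc dz; have hl2 := Rmin_r dc dz.
have [Pz1 Pz2] := Pz h hn ltac:(lra).
set q := fun k => c k (s0 + h).
have Fq := Fr q (z (s0 + h)) (fun k => proj2 (Pc k h hn ltac:(lra))) Pz2.
rewrite -/p0 -/z0 in Fq.
set Rr := G q (z (s0 + h)) - G p0 z0 -
  (sumI (fun k => dx k G p0 z0 * (q k - p0 k)) + dt G p0 z0 * (z (s0 + h) - z0)) in Fq.
have E : (G (fun k => c k (s0 + h)) (z (s0 + h)) - G (fun k => c k s0) (z s0)) / h -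
   (sumI (fun k => dx k G (fun k => c k s0) (z s0) * lc k) + dt G (fun k => c k s0) (z s0) * lz)
  = Rr / h + (sumI (fun k => A k * ((c k (s0 + h) - c k s0) / h - lc k)) + B * ((z (s0 + h) - z s0) / h - lz)).
  have -> : sumI (fun k => A k * ((c k (s0 + h) - c k s0) / h - lc k)) =
     sumI (fun k => dx k G p0 z0 * (q k - p0 k)) / h - sumI (fun k => A k * lc k).
    rewrite /Rdiv -sumI_scalr -sumI_minus; apply: sumI_ext => k.
    rewrite /A /q /p0; field; done.
  rewrite /Rr /A /B /q /p0 /z0; field; done.
rewrite E; apply: Rle_lt_trans (Rabs_triang _ _) _.
have T1 : Rabs (Rr / h) <= eps / 2.
  rewrite /Rdiv Rabs_mult Rabs_inv.
  have Hh : 0 < Rabs h by apply: Rabs_pos_lt.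
  apply: Rle_trans (Rmult_le_compat_r (/ Rabs h) _ _ _ Fq) _.
    by left; apply: Rinv_0_lt_compat.
  have S1 : (sumI (fun k => Rabs (q k - p0 k)) + Rabs (z (s0 + h) - z0)) * / Rabs h <= Bc.
    rewrite Rmult_plus_distr_r -sumI_scalr /Bc.
    have : Rabs (z (s0 + h) - z0) * / Rabs h <= Rabs lz + 1.
      rewrite -Rabs_inv -Rabs_mult.
      have := Rabs_triang_inv ((z (s0 + h) - z s0) / h) lz.
      have := Rmin_l 1 (eps / (2 * K)); rewrite -/e2 /z0 /Rdiv; lra.
    have : sumI (fun k => Rabs (q k - p0 k) * / Rabs h) <= sumI (fun k => Rabs (lc k) + 1).
      apply: sumI_le => k; rewrite -Rabs_inv -Rabs_mult.
      have := Rabs_triang_inv ((c k (s0 + h) - c k s0) / h) (lc k).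
      have := proj1 (Pc k h hn ltac:(lra)).
      have := Rmin_l 1 (eps / (2 * K)); rewrite -/e2 /q /p0 /Rdiv; lra.
    lra.
  rewrite Rmult_assoc.
  have Hnn : 0 <= eps / (2 * Bc) by lra.
  apply: Rle_trans (Rmult_le_compat_l _ _ _ Hnn S1) _.
  right; field; lra.
have T2 : Rabs (sumI (fun k => A k * ((c k (s0 + h) - c k s0) / h - lc k)) + B * ((z (s0 + h) - z s0) / h - lz)) <= (K - 1) * e2.
  apply: Rle_trans (Rabs_triang _ _) _.
  have : Rabs (B * ((z (s0 + h) - z s0) / h - lz)) <= Rabs B * e2.
    rewrite Rabs_mult; apply: Rmult_le_compat_l; [exact: Rabs_pos | lra].
  have : Rabs (sumI (fun k => A k * ((c k (s0 + h) - c k s0) / h - lc k))) <= sumI (fun k => Rabs (A k)) * e2.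
    apply: Rle_trans (sumI_abs _) _; rewrite -sumI_scalr; apply: sumI_le => k.
    rewrite Rabs_mult; apply: Rmult_le_compat_l; first exact: Rabs_pos.
    exact: Rlt_le (proj1 (Pc k h hn ltac:(lra))).
  rewrite /K; lra.
have T3 : (K - 1) * e2 < eps / 2.
  have : e2 <= eps / (2 * K) by apply: Rmin_r.
  move=> H; have : (K - 1) * e2 <= (K - 1) * (eps / (2 * K)) by apply: Rmult_le_compat_l; lra.
  have : (K - 1) * (eps / (2 * K)) < eps / 2.
    have -> : (K - 1) * (eps / (2 * K)) = eps / 2 - eps / (2 * K) by field; lra.
    have : 0 < eps / (2 * K) by apply: Rdiv_lt_0_compat; lra.
    lra.
  lra.
lra.
Qed.
End Chain.



Lemma DL_chain d (G : Fld d) o (c : 'I_d -> Fld d) (z : Fld d) x t (lc : 'I_d -> R) lz :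
  C_on (@TT d) 1 G -> (forall k, DL o (c k) x t (lc k)) -> DL o z x t lz ->
  DL o (fun y s => G (fun k => c k y s) (z y s)) x t
    (sumI (fun k => dx k G (fun k => c k x t) (z x t) * lc k) + dt G (fun k => c k x t) (z x t) * lz).
Proof.
move=> HG Hc Hz.
have := chain HG (c := fun k s => c k (lin x o s) (lint t o s)) Hc Hz.
by rewrite lin_base lint_base.
Qed.

Lemma clairaut (g g1 g2 g12 g21 : R -> R -> R) a b del0 :
  0 < del0 ->
  (forall s u, Rabs (s - a) < del0 -> Rabs (u - b) < del0 ->
    derivable_pt_lim (fun s' => g s' u) s (g1 s u) /\
    derivable_pt_lim (fun u' => g s u') u (g2 s u) /\
    derivable_pt_lim (fun u' => g1 s u') u (g12 s u) /\
    derivable_pt_lim (fun s' => g2 s' u) s (g21 s u)) ->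
  (forall eps, 0 < eps -> exists del, 0 < del /\ forall s u, Rabs (s - a) < del -> Rabs (u - b) < del ->
     Rabs (g12 s u - g12 a b) < eps /\ Rabs (g21 s u - g21 a b) < eps) ->
  g12 a b = g21 a b.
Proof.
move=> Hd0 HD HC.
suff H : forall eps, 0 < eps -> Rabs (g12 a b - g21 a b) < 2 * eps.
  apply: Rminus_diag_uniq; case: (Req_dec (g12 a b - g21 a b) 0) => // hne.
  have hp := Rabs_pos_lt _ hne.
  have := H (Rabs (g12 a b - g21 a b) / 4) ltac:(lra); lra.
move=> eps He; have [del [Hdel HCd]] := HC eps He.
set h := Rmin del del0 / 2.
have Hh : 0 < h by rewrite /h; have := Rmin_glb_lt _ _ _ Hdel Hd0; lra.
have Hh1 : h < del by rewrite /h; have := Rmin_l del del0; lra.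
have Hh2 : h < del0 by rewrite /h; have := Rmin_r del del0; lra.
have ab : a < a + h by lra.
have bb : b < b + h by lra.
have near : forall c, a <= c <= a + h -> Rabs (c - a) <= h.
  move=> c Hc; rewrite Rabs_right; lra.
have nearb : forall c, b <= c <= b + h -> Rabs (c - b) <= h.
  move=> c Hc; rewrite Rabs_right; lra.
have [c1 [E1 Hc1]] := MVT_cor2 (fun s => g s (b + h) - g s b) (fun s => g1 s (b + h) - g1 s b) a (a + h) ab
  (fun c Hc => dpl_minus (proj1 (HD c (b + h) ltac:(have := near c Hc; lra) ltac:(rewrite Rplus_minus_l Rabs_right; lra)))
                         (proj1 (HD c b ltac:(have := near c Hc; lra) ltac:(rewrite Rminus_diag Rabs_R0; lra)))).
have [e1 [F1 He1]] := MVT_cor2 (fun u => g1 c1 u) (fun u => g12 c1 u) b (b + h) bb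
  (fun c Hc => proj1 (proj2 (proj2 (HD c1 c ltac:(rewrite Rabs_right; lra) ltac:(have := nearb c Hc; lra))))).
have [e2 [E2 He2]] := MVT_cor2 (fun u => g (a + h) u - g a u) (fun u => g2 (a + h) u - g2 a u) b (b + h) bb
  (fun c Hc => dpl_minus (proj1 (proj2 (HD (a + h) c ltac:(rewrite Rplus_minus_l Rabs_right; lra) ltac:(have := nearb c Hc; lra))))
                         (proj1 (proj2 (HD a c ltac:(rewrite Rminus_diag Rabs_R0; lra) ltac:(have := nearb c Hc; lra))))).
have [c2 [F2 Hc2]] := MVT_cor2 (fun s => g2 s e2) (fun s => g21 s e2) a (a + h) ab
  (fun c Hc => proj2 (proj2 (proj2 (HD c e2 ltac:(have := near c Hc; lra) ltac:(rewrite Rabs_right; lra))))).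
simpl in E1, F1, E2, F2.
have Eq : g12 c1 e1 = g21 c2 e2.
  have : h * (h * g12 c1 e1) = h * (h * g21 c2 e2).
    have -> : h * (h * g12 c1 e1) = g12 c1 e1 * (b + h - b) * (a + h - a) by ring.
    have -> : h * (h * g21 c2 e2) = g21 c2 e2 * (a + h - a) * (b + h - b) by ring.
    rewrite -F1 -F2 -E1 -E2; ring.
  move=> H; apply: (Rmult_eq_reg_l h); [apply: (Rmult_eq_reg_l h) => //|]; lra.
have [A1 _] := HCd c1 e1 ltac:(rewrite Rabs_right; lra) ltac:(rewrite Rabs_right; lra).
have [_ A2] := HCd c2 e2 ltac:(rewrite Rabs_right; lra) ltac:(rewrite Rabs_right; lra).
rewrite Eq in A1.
have := Rabs_triang (g12 a b - g21 c2 e2) (g21 c2 e2 - g21 a b).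
rewrite (Rabs_minus_sym (g12 a b)).
have -> : g12 a b - g21 c2 e2 + (g21 c2 e2 - g21 a b) = g12 a b - g21 a b by ring.
lra.
Qed.



Section Schwarz.
Variable d : nat.
Variable U : Vec d -> R -> Prop.
Hypothesis Uopen : forall x t, U x t -> exists del, 0 < del /\
  forall y s, (forall i, Rabs (y i - x i) < del) -> Rabs (s - t) < del -> U y s.

Lemma upd_comm (x : Vec d) i k s u : i != k -> upd (upd x i s) k u = upd (upd x k u) i s.
Proof.
move=> ne; apply: functional_extensionality => j; rewrite /upd.
case: (eqVneq j k) => [->|jk]; first by rewrite eq_sym (negbTE ne).
by case: (j == i).
Qed.
Lemma upd_other (x : Vec d) i k s : i != k -> upd x k s i = x i.
Proof. by move=> ne; rewrite /upd (negbTE ne). Qed.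

Lemma upd_close (x : Vec d) i s del : 0 < del -> Rabs (s - x i) < del ->
  forall j, Rabs (upd x i s j - x j) < del.
Proof.
move=> Hd Hs j; rewrite /upd; case: eqP => [->|] //; by rewrite Rminus_diag Rabs_R0.
Qed.

Lemma cont_at (F : Fld d) x t : cont_on U F -> U x t ->
  forall eps, 0 < eps -> exists del, 0 < del /\ forall y s,
   (forall i, Rabs (y i - x i) < del) -> Rabs (s - t) < del -> Rabs (F y s - F x t) < eps.
Proof.
move=> HC Hu eps He; have [d1 [Hd1 H1]] := HC x t Hu eps He.
have [d2 [Hd2 H2]] := Uopen Hu.
exists (Rmin d1 d2); split; first exact: Rmin_glb_lt.
move=> y s Hy Hs; have m1 := Rmin_l d1 d2; have m2 := Rmin_r d1 d2.
apply: H1; [apply: H2|move=> i; have := Hy i|]; try lra.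
move=> i; have := Hy i; lra.
Qed.

Lemma schwarz_t (F : Fld d) x t i : C_on U 2 F -> U x t ->
  dt (dx i F) x t = dx i (dt F) x t.
Proof.
move=> HF Hu.
have [d0 [Hd0 HU]] := Uopen Hu.
have HF' := HF; case: HF' => _ [_ [H1 H2]].
have Hin : forall s u, Rabs (s - x i) < d0 -> Rabs (u - t) < d0 -> U (upd x i s) u.
  move=> s u Hs Hu'; apply: HU => //; exact: upd_close.
have := @clairaut (fun s u => F (upd x i s) u) (fun s u => dx i F (upd x i s) u)
  (fun s u => dt F (upd x i s) u) (fun s u => dt (dx i F) (upd x i s) u)
  (fun s u => dx i (dt F) (upd x i s) u) (x i) t d0 Hd0.
rewrite upd_same; apply.
- move=> s u Hs Hu'; have Hy := Hin s u Hs Hu'; split; [|split; [|split]].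
  + have := DL_C (Some i) HF Hy; rewrite /DL /= upd_at.
    apply: dpl_eq => // y; by rewrite upd_upd.
  + exact: (DL_C None HF Hy).
  + exact: (DL_C (k:=0) None (H1 i) Hy).
  + have := DL_C (k:=0) (Some i) H2 Hy; rewrite /DL /= upd_at.
    apply: dpl_eq => // y; by rewrite upd_upd.
- move=> eps He.
  have [e1 [He1 C1]] := cont_at (proj2 (proj2 (proj2 (H1 i)))) Hu He.
  have [e2 [He2 C2]] := cont_at (proj1 (proj2 (proj2 H2)) i) Hu He.
  exists (Rmin e1 e2); split; first exact: Rmin_glb_lt.
  move=> s u Hs Hu'; have m1 := Rmin_l e1 e2; have m2 := Rmin_r e1 e2.
  split; [apply: C1|apply: C2]; try lra; apply: upd_close; lra.
Qed.

Lemma schwarz_x (F : Fld d) x t i k : C_on U 2 F -> U x t ->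
  dx k (dx i F) x t = dx i (dx k F) x t.
Proof.
move=> HF Hu.
case: (eqVneq i k) => [->|ne] //.
have [d0 [Hd0 HU]] := Uopen Hu.
have HF' := HF; case: HF' => _ [_ [H1 H2]].
set Y := fun s u => upd (upd x i s) k u.
have Hin : forall s u, Rabs (s - x i) < d0 -> Rabs (u - x k) < d0 -> U (Y s u) t.
  move=> s u Hs Hu'; apply: HU; last by rewrite Rminus_diag Rabs_R0.
  move=> j; rewrite /Y /upd; case: eqP => [->|_] //; case: eqP => [->|_] //.
  by rewrite Rminus_diag Rabs_R0.
have Yi : forall s u, Y s u i = s by move=> s u; rewrite /Y upd_other // upd_at.
have Yk : forall s u, Y s u k = u by move=> s u; rewrite /Y upd_at.
have Yi' : forall s u s', upd (Y s u) i s' = Y s' u.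
  by move=> s u s'; rewrite /Y [upd (upd x i s) k u]upd_comm // [upd (upd x i s') k u]upd_comm // upd_upd.
have Yk' : forall s u u', upd (Y s u) k u' = Y s u' by move=> s u u'; rewrite /Y upd_upd.
have Yx : Y (x i) (x k) = x by rewrite /Y !upd_same.
have := @clairaut (fun s u => F (Y s u) t) (fun s u => dx i F (Y s u) t)
  (fun s u => dx k F (Y s u) t) (fun s u => dx k (dx i F) (Y s u) t)
  (fun s u => dx i (dx k F) (Y s u) t) (x i) (x k) d0 Hd0.
rewrite Yx; apply.
- move=> s u Hs Hu'; have Hy := Hin s u Hs Hu'; split; [|split; [|split]].
  + have := DL_C (Some i) HF Hy; rewrite /DL /= Yi.
    apply: dpl_eq => // y; by rewrite Yi'.
  + have := DL_C (Some k) HF Hy; rewrite /DL /= Yk.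
    apply: dpl_eq => // y; by rewrite Yk'.
  + have := DL_C (k:=0) (Some k) (H1 i) Hy; rewrite /DL /= Yk.
    apply: dpl_eq => // y; by rewrite Yk'.
  + have := DL_C (k:=0) (Some i) (H1 k) Hy; rewrite /DL /= Yi.
    apply: dpl_eq => // y; by rewrite Yi'.
- move=> eps He.
  have [e1 [He1 C1]] := cont_at (proj1 (proj2 (proj2 (H1 i))) k) Hu He.
  have [e2 [He2 C2]] := cont_at (proj1 (proj2 (proj2 (H1 k))) i) Hu He.
  exists (Rmin e1 e2); split; first exact: Rmin_glb_lt.
  move=> s u Hs Hu'; have m1 := Rmin_l e1 e2; have m2 := Rmin_r e1 e2.
  have Hc : forall j, Rabs (Y s u j - x j) < Rmin e1 e2.
    move=> j; rewrite /Y /upd; case: eqP => [->|_] //; case: eqP => [->|_] //.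
    by rewrite Rminus_diag Rabs_R0; apply: Rmin_glb_lt.
  split; [apply: C1|apply: C2]; try (rewrite Rminus_diag Rabs_R0; lra);
   move=> j; have := Hc j; lra.
Qed.
End Schwarz.



Lemma sumI_ext2 d (F G : 'I_d -> 'I_d -> R) : (forall i j, F i j = G i j) ->
  sumI (fun i => sumI (fun j => F i j)) = sumI (fun i => sumI (fun j => G i j)).
Proof. move=> H; apply: sumI_ext => i; exact: sumI_ext. Qed.
Lemma sumI_in d c (F : 'I_d -> R) : c * sumI F = sumI (fun i => c * F i).
Proof. by rewrite sumI_scal. Qed.

Lemma alg d (v vt : 'I_d -> R) (vx : 'I_d -> 'I_d -> R)
 (pht : R) (phx phxt phtx : 'I_d -> R) (phxx : 'I_d -> 'I_d -> R)
 (xi : 'I_d -> R) (X : 'I_d -> 'I_d -> R)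
 (p : R) (px : 'I_d -> R) (mu : R) (mux Wd : 'I_d -> R) (M : 'I_d -> 'I_d -> R)
 (rho rho' eta mm rc' fz S : R) :
 S = sumI (fun i => v i ^ 2) ->
 (forall k, phxt k = phtx k) -> (forall k j, phxx k j = phxx j k) ->
 (forall i j, xi i * phx j = xi j * phx i) ->
 (forall i, rho' * pht * v i + rho * vt i
     + sumI (fun j => (rho' * phx j * v i + rho * vx i j) * v j + rho * v i * vx j j)
     - sumI (fun j => M i j) + px i
     = - sumI (fun j => X i j * phx j + xi i * phxx j j)) ->
 sumI (fun j => vx j j) = 0 ->
 rc' * pht + sumI (fun i => v i * (rc' * phx i)) = sumI Wd ->
 rc' * mu = fz - sumI (fun i => X i i) - rho' * S / 2 ->
 let D i j := (vx i j + vx j i) / 2 in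
 let E (pho : R) (vo : 'I_d -> R) (phko : 'I_d -> R) :=
   rho' * pho * S / 2 + rho * sumI (fun i => 2 * v i * vo i) / 2
   + (sumI (fun k => xi k * phko k) + fz * pho) in
 let P := pht + sumI (fun k => v k * phx k) in
 E pht vt phxt + sumI (fun j => v j * E (phx j) (fun i => vx i j) (fun k => phxx k j))
 - sumI (fun i => sumI (fun j =>
      (M j i - (phxx i i * xi j + phx i * X j i) - (if i == j then px i else 0)) * v j
      + (2 * eta * D i j - phx i * xi j - (if i == j then p else 0)) * vx j i))
 - sumI (fun i => (phtx i + sumI (fun k => vx k i * phx k + v k * phxx k i)) * xi i + P * X i i)
 + sumI (fun i => mux i * (- (mm * mux i)) + mu * (- Wd i))
 = - (2 * eta * sumI (fun i => sumI (fun j => D i j ^ 2)) + mm * sumI (fun i => mux i ^ 2)).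
Proof.
move=> HS Hsch Hsym Hxs Hmom Hinc Hph Hch D E P.
set Q := sumI (fun k => v k * phx k).
set N1 := sumI (fun i => v i * vt i).
set N2 := sumI (fun j => v j * sumI (fun i => v i * vx i j)).
set N3 := sumI (fun k => xi k * phtx k).
set N4 := sumI (fun j => v j * sumI (fun k => xi k * phxx k j)).
set N5 := sumI (fun i => xi i * sumI (fun k => vx k i * phx k)).
set N6 := sumI (fun i => sumI (fun j => phx i * xi j * vx j i)).
set N7 := sumI (fun i => xi i * sumI (fun k => v k * phxx k i)).
set N8 := sumI (fun i => X i i).
set N9 := sumI Wd.
set N10 := sumI (fun i => mux i ^ 2).
set N11 := sumI (fun i => sumI (fun j => D i j ^ 2)).
set N12 := sumI (fun i => sumI (fun j => D i j * vx j i)).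
set N13 := sumI (fun i => sumI (fun j => M j i * v j)).
set N14 := sumI (fun i => sumI (fun j => (phxx i i * xi j + phx i * X j i) * v j)).
set N15 := sumI (fun i => v i * px i).
set N16 := sumI (fun j => vx j j).
have hE1 : E pht vt phxt = rho' * pht * S / 2 + rho * N1 + N3 + fz * pht.
  rewrite /E.
  have -> : sumI (fun i => 2 * v i * vt i) = 2 * N1.
    by rewrite /N1 -sumI_scal; apply: sumI_ext => i; ring.
  have -> : sumI (fun k => xi k * phxt k) = N3.
    by apply: sumI_ext => k; rewrite Hsch.
  field.
have hE2 : sumI (fun j => v j * E (phx j) (fun i => vx i j) (fun k => phxx k j))
   = rho' * S / 2 * Q + rho * N2 + N4 + fz * Q.
  rewrite /E /Q /N2 /N4 !sumI_in -!sumI_split; apply: sumI_ext => j.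
  have -> : sumI (fun i => 2 * v i * vx i j) = 2 * sumI (fun i => v i * vx i j).
    by rewrite -sumI_scal; apply: sumI_ext => i; ring.
  field.
have hN12 : N12 = N11.
  have : 2 * N12 = 2 * N11.
    have -> : 2 * N12 = N12 + N12 by ring.
    rewrite {2}/N12 sumI_swap /N12 /N11 -sumI_split.
    rewrite (sumI_in 2); apply: sumI_ext => i.
    rewrite -sumI_split sumI_in; apply: sumI_ext => j.
    rewrite /D; field.
  lra.
have hS : sumI (fun i => sumI (fun j =>
      (M j i - (phxx i i * xi j + phx i * X j i) - (if i == j then px i else 0)) * v j
      + (2 * eta * D i j - phx i * xi j - (if i == j then p else 0)) * vx j i))
   = N13 - N14 - N15 + 2 * eta * N12 - N6 - p * N16.
  have -> : N15 = sumI (fun i => sumI (fun j => (if i == j then px i else 0) * v j)).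
    apply: sumI_ext => i.
    rewrite (sumI_ext (G := fun j => if i == j then px i * v j else 0)).
      by rewrite sumI_delta; ring.
    move=> j; case: eqP => [->|_]; ring.
  have -> : N16 = sumI (fun i => sumI (fun j => (if i == j then 1 else 0) * vx j i)).
    apply: sumI_ext => i.
    rewrite (sumI_ext (G := fun j => if i == j then vx j i else 0)).
      by rewrite sumI_delta.
    move=> j; case: eqP => [->|_]; ring.
  rewrite /N13 /N14 /N12 /N6 !sumI_in -!sumI_minus -!sumI_split -!sumI_minus.
  apply: sumI_ext => i; rewrite !sumI_in -!sumI_minus -!sumI_split -!sumI_minus.
  apply: sumI_ext => j; case: (i == j); ring.
have hC : sumI (fun i => (phtx i + sumI (fun k => vx k i * phx k + v k * phxx k i)) * xi i + P * X i i)
   = N3 + N5 + N7 + P * N8.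
  rewrite /N3 /N5 /N7 /N8 (sumI_in P) -!sumI_split; apply: sumI_ext => i.
  rewrite sumI_split; ring.
have hDm : sumI (fun i => mux i * (- (mm * mux i)) + mu * (- Wd i)) = - mm * N10 - mu * N9.
  rewrite /N10 /N9 -(sumI_scal (- mm)) -(sumI_scal mu) -sumI_minus.
  apply: sumI_ext => i; ring.
have hN5 : N5 = N6.
  rewrite /N5 /N6; apply: sumI_ext => i; rewrite sumI_in; apply: sumI_ext => j.
  have -> : xi i * (vx j i * phx j) = vx j i * (xi i * phx j) by ring.
  rewrite Hxs; ring.
have hN7 : N7 = N4.
  rewrite /N7 /N4.
  have -> : sumI (fun j => v j * sumI (fun k => xi k * phxx k j))
         = sumI (fun j => sumI (fun k => v j * (xi k * phxx k j))).
    by apply: sumI_ext => j; rewrite sumI_in.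
  rewrite sumI_swap; apply: sumI_ext => i; rewrite sumI_in; apply: sumI_ext => k.
  rewrite Hsym; ring.
have hN2 : sumI (fun j => v j * sumI (fun i => vx j i * v i)) = N2.
  rewrite /N2.
  have -> : sumI (fun j => v j * sumI (fun i => v i * vx i j))
         = sumI (fun j => sumI (fun i => v j * (v i * vx i j))).
    by apply: sumI_ext => j; rewrite sumI_in.
  rewrite sumI_swap; apply: sumI_ext => i; rewrite sumI_in; apply: sumI_ext => k.
  ring.
have hmom : N13 = rho' * pht * S + rho * N1 + rho' * S * Q + rho * N2 + rho * S * N16 + N15 + N14.
  have -> : N13 = sumI (fun j => v j * sumI (fun i => M j i)).
    rewrite /N13 sumI_swap; apply: sumI_ext => j; rewrite sumI_in.
    apply: sumI_ext => i; ring.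
  have -> : N14 = sumI (fun j => v j * sumI (fun i => X j i * phx i + xi j * phxx i i)).
    rewrite /N14 sumI_swap; apply: sumI_ext => j; rewrite sumI_in.
    apply: sumI_ext => i; ring.
  have EM : forall j, sumI (fun i => M j i) = rho' * pht * v j + rho * vt j
     + sumI (fun i => (rho' * phx i * v j + rho * vx j i) * v i + rho * v j * vx i i)
     + px j + sumI (fun i => X j i * phx i + xi j * phxx i i).
    move=> j; have := Hmom j; lra.
  have EI : forall j, sumI (fun i => (rho' * phx i * v j + rho * vx j i) * v i + rho * v j * vx i i)
      = rho' * v j * Q + rho * sumI (fun i => vx j i * v i) + rho * v j * N16.
    move=> j; rewrite /Q /N16 -!sumI_scal -!sumI_split; apply: sumI_ext => i; ring.
  rewrite (sumI_ext (G := fun j => (rho' * pht) * v j ^ 2 + rho * (v j * vt j)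
       + (rho' * Q) * v j ^ 2 + rho * (v j * sumI (fun i => vx j i * v i))
       + (rho * N16) * v j ^ 2 + v j * px j
       + v j * sumI (fun i => X j i * phx i + xi j * phxx i i))); last first.
    by move=> j; rewrite EM EI; ring.
  rewrite !sumI_split !sumI_scal -HS hN2.
  rewrite /N1 /N15; ring.
rewrite hE1 hE2 hS hC hDm hN12 hN5 hN7 hmom (Hinc : N16 = 0).
have Hfz : fz = rc' * mu + N8 + rho' * S / 2 by rewrite /N8; lra.
have HN9 : N9 = rc' * P.
  rewrite /N9 -Hph /P /Q Rmult_plus_distr_l sumI_in; congr (_ + _).
  apply: sumI_ext => i; ring.
rewrite Hfz HN9 /P -/Q.
clearbody Q N1 N2 N3 N4 N5 N6 N7 N8 N9 N10 N11 N12 N13 N14 N15 N16 P D E. field.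

Qed.



Lemma dpl_local (g1 g2 : R -> R) s0 del l : 0 < del ->
  (forall s, Rabs (s - s0) < del -> g1 s = g2 s) ->
  derivable_pt_lim g1 s0 l -> derivable_pt_lim g2 s0 l.
Proof.
move=> Hd H H1 eps He; have [dl Hdl] := H1 eps He.
have Hp : 0 < Rmin dl del by apply: Rmin_glb_lt => //; exact: cond_pos.
exists (mkposreal _ Hp) => h hn /= hl.
have m1 := Rmin_l dl del; have m2 := Rmin_r dl del.
rewrite -!H; first (apply: Hdl => //; lra).
- by rewrite Rminus_diag Rabs_R0.
- by rewrite /Rminus Rplus_comm -Rplus_assoc Rplus_opp_l Rplus_0_l; lra.
Qed.

Lemma deriv_local (g1 g2 : R -> R) s0 del : 0 < del ->
  (forall s, Rabs (s - s0) < del -> g1 s = g2 s) -> deriv g1 s0 = deriv g2 s0.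
Proof.
move=> Hd H.
have H' : forall s, Rabs (s - s0) < del -> g2 s = g1 s by move=> s hs; rewrite H.
rewrite /deriv.
case: excluded_middle_informative => [e1|n1]; case: excluded_middle_informative => [e2|n2].
- case: constructive_indefinite_description => l1 h1.
  case: constructive_indefinite_description => l2 h2 /=.
  exact: (uniqueness_limite _ _ _ _ (dpl_local Hd H h1) h2).
- by exfalso; apply: n2; case: e1 => l hl; exists l; exact: dpl_local Hd H hl.
- by exfalso; apply: n1; case: e2 => l hl; exists l; exact: dpl_local Hd H' hl.
- done.
Qed.

Lemma DL_div2 d o (F : Fld d) x t l : DL o F x t l -> DL o (fun y s => F y s / 2) x t (l / 2).
Proof.
move=> H; have := DL_mult H (DL_const o (/ 2) x t).
apply: DL_val; rewrite /Rdiv; ring.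
Qed.

Lemma symgrad_sym d (v : 'I_d -> Fld d) i j : symgrad v i j = symgrad v j i.
Proof.
apply: functional_extensionality => y; apply: functional_extensionality => s.
rewrite /symgrad; f_equal; ring.
Qed.

Unset Implicit Arguments.


Theorem mainTheorem4 (d : nat) (Omega : Vec d -> Prop) (T : R)
  (rhoh rhoc eta m : R -> R) (f a : R -> Vec d -> R)
  (v : 'I_d -> Fld d) (p phi mu : Fld d) :
  is_open Omega ->
  smoothR rhoh -> smoothR rhoc -> smoothR eta -> smoothR m -> smoothf f ->
  (forall z, 0 <= eta z) -> (forall z, 0 <= m z) ->
  let U := fun x t => Omega x /\ 0 < t < T in
  (forall i, C_on U 2 (v i)) -> C_on U 2 p -> C_on U 2 phi -> C_on U 2 mu ->
  (forall x t, U x t ->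
     momentum_eq rhoh eta a v p phi x t /\ incompressible v x t /\
     phase_eq rhoc m v phi mu x t /\ chem_pot_eq rhoh rhoc f a v phi mu x t /\
     a_relation f a phi x t) ->
  forall x t, U x t ->
    dissip_lhs rhoh eta m f v p phi mu x t = - dissip_rate eta m v phi mu x t /\
    - dissip_rate eta m v phi mu x t <= 0.
Proof.
move=> HO Hrh Hrc Het Hm Hf Heta Hmpos U Hv Hp Hphi Hmu Heqs x t Hu.
have Uopen : forall x t, U x t -> exists del, 0 < del /\ forall y s,
    (forall i, Rabs (y i - x i) < del) -> Rabs (s - t) < del -> U y s.
  move=> x0 t0 [Hx0 Ht0]; have [del [Hdel Hy]] := HO x0 Hx0.
  have Hp0 : 0 < Rmin del (Rmin t0 (T - t0)).
    apply: Rmin_glb_lt => //; apply: Rmin_glb_lt; lra.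
  exists (Rmin del (Rmin t0 (T - t0))); split => // y s Hys Hs.
  have m1 := Rmin_l del (Rmin t0 (T - t0)); have m2 := Rmin_r del (Rmin t0 (T - t0)).
  have m3 := Rmin_l t0 (T - t0); have m4 := Rmin_r t0 (T - t0).
  split; first by apply: Hy => i; have := Hys i; lra.
  move/Rabs_def2: Hs; lra.
have sm : forall g, smoothR g -> forall z, exists l, derivable_pt_lim g z l.
  by move=> g H; exact: (proj1 (proj2 (H 1%nat))).
pose GF := fun (q : Vec d) z => f z q.
have HG1 : C_on (@TT d) 1 GF := Hf 1%nat.
have HGx : forall i, C_on (@TT d) 1 (dx i GF) := fun i => proj1 (proj2 (proj2 (Hf 2%nat))) i.
have [Hmom [Hinc [Hph [Hch Har]]]] := Heqs x t Hu.
have Dphi : forall o, DL o phi x t (Dd o phi x t) := fun o => DL_C o Hphi Hu.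
have Ddphi : forall k o, DL o (dx k phi) x t (Dd o (dx k phi) x t) :=
  fun k o => DL_C (k:=0) o (proj1 (proj2 (proj2 Hphi)) k) Hu.
have Ddtphi : forall o, DL o (dt phi) x t (Dd o (dt phi) x t) :=
  fun o => DL_C (k:=0) o (proj2 (proj2 (proj2 Hphi))) Hu.
have Dv : forall i o, DL o (v i) x t (Dd o (v i) x t) := fun i o => DL_C o (Hv i) Hu.
have Ddv : forall i j o, DL o (dx j (v i)) x t (Dd o (dx j (v i)) x t) :=
  fun i j o => DL_C (k:=0) o (proj1 (proj2 (proj2 (Hv i))) j) Hu.
have Dp : forall o, DL o p x t (Dd o p x t) := fun o => DL_C o Hp Hu.
have Dmu : forall o, DL o mu x t (Dd o mu x t) := fun o => DL_C o Hmu Hu.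
have Ddmu : forall k o, DL o (dx k mu) x t (Dd o (dx k mu) x t) :=
  fun k o => DL_C (k:=0) o (proj1 (proj2 (proj2 Hmu)) k) Hu.
have Dxi : forall i o, DL o (xi f phi i) x t (Dd o (xi f phi i) x t).
  move=> i o; apply: DL_ex.
  have -> : xi f phi i = (fun y s => dx i GF (fun k => dx k phi y s) (phi y s)) by [].
  eexists; exact: (DL_chain (G := dx i GF) (c := fun k => dx k phi) (z := phi) (HGx i) (fun k => Ddphi k o) (Dphi o)).
have loc : forall j (F1 F2 : Fld d), (forall y, U y t -> F1 y t = F2 y t) ->
    dx j F1 x t = dx j F2 x t.
  move=> j F1 F2 H; have [del [Hdel HU]] := Uopen x t Hu.
  apply: (deriv_local (del:=del)) => // s Hs; apply: H; apply: HU.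
  - exact: upd_close.
  - by rewrite Rminus_diag Rabs_R0.
have Har' : forall y, U y t -> forall i, xi f phi i y t = a_phi a phi y t * dx i phi y t.
  by move=> y Hy; exact: (proj2 (proj2 (proj2 (proj2 (Heqs y t Hy))))).
have DE : forall o, DL o (energy rhoh f v phi) x t
  (deriv rhoh (phi x t) * Dd o phi x t * sqnormV v x t / 2
   + rhoh (phi x t) * sumI (fun i => 2 * v i x t * Dd o (v i) x t) / 2
   + (sumI (fun k => dx k GF (fun k => dx k phi x t) (phi x t) * Dd o (dx k phi) x t)
      + dt GF (fun k => dx k phi x t) (phi x t) * Dd o phi x t)).
  move=> o.
  have h1 := DL_comp (sm _ Hrh) (Dphi o).
  have h2 : DL o (sqnormV v) x t (sumI (fun i => 2 * v i x t * Dd o (v i) x t)).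
    exact: (DL_sum (fun i => DL_sq (Dv i o))).
  have h3 := DL_div2 (DL_mult h1 h2).
  have h4 := DL_chain (G := GF) (c := fun k => dx k phi) (z := phi) HG1 (fun k => Ddphi k o) (Dphi o).
  have h5 := DL_plus h3 h4.
  apply: DL_val h5; rewrite /Rdiv; ring.
have E0 : dt (energy rhoh f v phi) x t = _ := DL_Dd (DE None).
have Ej : forall j, dx j (energy rhoh f v phi) x t = _ := fun j => DL_Dd (DE (Some j)).
have Dsg : forall i j o, DL o (fun y s => 2 * eta (phi y s) * symgrad v i j y s) x t
    (Dd o (fun y s => 2 * eta (phi y s) * symgrad v i j y s) x t).
  move=> i j o; apply: DL_ex; eexists.
  exact: (DL_mult (DL_mult (DL_const o 2 x t) (DL_comp (sm _ Het) (Dphi o)))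
                  (DL_div2 (DL_plus (Ddv i j o) (Ddv j i o)))).
have DI : forall i j, DL (Some i) (idM p i j) x t (if i == j then dx i p x t else 0).
  move=> i j; rewrite /idM; case: (i == j); [exact: Dp | exact: DL_const].
have DT : forall i j, DL (Some i) (stress eta f v p phi i j) x t
   (dx i (fun y s => 2 * eta (phi y s) * symgrad v j i y s) x t
    - (dx i (dx i phi) x t * xi f phi j x t + dx i phi x t * dx i (xi f phi j) x t)
    - (if i == j then dx i p x t else 0)).
  move=> i j; rewrite -symgrad_sym.
  exact: (DL_minus (DL_minus (Dsg i j (Some i)) (DL_mult (Ddphi i (Some i)) (Dxi j (Some i)))) (DI i j)).
have Sdiv : divV (matvec (stress eta f v p phi) v) x t = sumI (fun i => sumI (fun j =>
   (dx i (fun y s => 2 * eta (phi y s) * symgrad v j i y s) x t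
    - (dx i (dx i phi) x t * xi f phi j x t + dx i phi x t * dx i (xi f phi j) x t)
    - (if i == j then dx i p x t else 0)) * v j x t
   + stress eta f v p phi i j x t * dx i (v j) x t)).
  apply: sumI_ext => i.
  exact: (DL_Dd (DL_sum (fun j => DL_mult (DT i j) (Dv j (Some i))))).
have DPd : forall i, DL (Some i) (phidot v phi) x t
   (dx i (dt phi) x t + sumI (fun k => dx i (v k) x t * dx k phi x t + v k x t * dx i (dx k phi) x t)).
  move=> i; exact: (DL_plus (Ddtphi (Some i)) (DL_sum (fun k => DL_mult (Dv k (Some i)) (Ddphi k (Some i))))).
have Pdiv : divV (fun i y s => phidot v phi y s * xi f phi i y s) x t = sumI (fun i =>
   (dx i (dt phi) x t + sumI (fun k => dx i (v k) x t * dx k phi x t + v k x t * dx i (dx k phi) x t))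
    * xi f phi i x t + phidot v phi x t * dx i (xi f phi i) x t).
  apply: sumI_ext => i; exact: (DL_Dd (DL_mult (DPd i) (Dxi i (Some i)))).
have DW : forall i o, DL o (fun y s => m (phi y s) * dx i mu y s) x t (Dd o (fun y s => m (phi y s) * dx i mu y s) x t).
  move=> i o; apply: DL_ex; eexists.
  exact: (DL_mult (DL_comp (sm _ Hm) (Dphi o)) (Ddmu i o)).
have Mdiv : divV (fun i y s => mu y s * flux m phi mu i y s) x t = sumI (fun i =>
   dx i mu x t * flux m phi mu i x t + mu x t * (- dx i (fun y s => m (phi y s) * dx i mu y s) x t)).
  apply: sumI_ext => i; exact: (DL_Dd (DL_mult (Dmu (Some i)) (DL_opp (DW i (Some i))))).
have M1 : forall i, dt (fun y s => rhoh (phi y s) * v i y s) x t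
    = deriv rhoh (phi x t) * dt phi x t * v i x t + rhoh (phi x t) * dt (v i) x t.
  move=> i; exact: (DL_Dd (DL_mult (DL_comp (sm _ Hrh) (Dphi None)) (Dv i None))).
have M2 : forall i, divM (fun k j y s => rhoh (phi y s) * v k y s * v j y s) i x t
    = sumI (fun j => (deriv rhoh (phi x t) * dx j phi x t * v i x t + rhoh (phi x t) * dx j (v i) x t) * v j x t
                     + rhoh (phi x t) * v i x t * dx j (v j) x t).
  move=> i; rewrite /divM; apply: sumI_ext => j.
  exact: (DL_Dd (DL_mult (DL_mult (DL_comp (sm _ Hrh) (Dphi (Some j))) (Dv i (Some j))) (Dv j (Some j)))).
have M3 : forall i, divM (fun k j y s => a_phi a phi y s * (dx k phi y s * dx j phi y s)) i x t
    = sumI (fun j => dx j (xi f phi i) x t * dx j phi x t + xi f phi i x t * dx j (dx j phi) x t).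
  move=> i; rewrite /divM; apply: sumI_ext => j.
  rewrite (loc j _ (fun y s => xi f phi i y s * dx j phi y s)).
    exact: (DL_Dd (DL_mult (Dxi i (Some j)) (Ddphi j (Some j)))).
  by move=> y Hy; rewrite (Har' y Hy i) Rmult_assoc.
have Mom' : forall i, deriv rhoh (phi x t) * dt phi x t * v i x t + rhoh (phi x t) * dt (v i) x t
    + sumI (fun j => (deriv rhoh (phi x t) * dx j phi x t * v i x t + rhoh (phi x t) * dx j (v i) x t) * v j x t
                     + rhoh (phi x t) * v i x t * dx j (v j) x t)
    - sumI (fun j => dx j (fun y s => 2 * eta (phi y s) * symgrad v i j y s) x t) + dx i p x t
    = - sumI (fun j => dx j (xi f phi i) x t * dx j phi x t + xi f phi i x t * dx j (dx j phi) x t).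
  move=> i; have H := Hmom i; rewrite M1 M2 M3 in H; exact: H.
have P1 : dt (compF rhoc phi) x t = deriv rhoc (phi x t) * dt phi x t.
  exact: (DL_Dd (DL_comp (sm _ Hrc) (Dphi None))).
have P2 : adv v (compF rhoc phi) x t = sumI (fun i => v i x t * (deriv rhoc (phi x t) * dx i phi x t)).
  rewrite /adv; apply: sumI_ext => i; congr (_ * _).
  exact: (DL_Dd (DL_comp (sm _ Hrc) (Dphi (Some i)))).
have Hph' := Hph; rewrite /phase_eq P1 P2 in Hph'.
have C1 : divV (fun i y s => a_phi a phi y s * dx i phi y s) x t = sumI (fun i => dx i (xi f phi i) x t).
  rewrite /divV; apply: sumI_ext => i; apply: loc => y Hy; by rewrite (Har' y Hy i).
have Hch' := Hch; rewrite /chem_pot_eq C1 in Hch'.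
have Hxs : forall i j, xi f phi i x t * dx j phi x t = xi f phi j x t * dx i phi x t.
  by move=> i j; rewrite !(Har' x Hu); ring.
have Hsch : forall k, dt (dx k phi) x t = dx k (dt phi) x t.
  by move=> k; apply: (schwarz_t Uopen).
have Hsym : forall k j, dx j (dx k phi) x t = dx k (dx j phi) x t.
  by move=> k j; apply: (schwarz_x Uopen).
have Adv : adv v (energy rhoh f v phi) x t = sumI (fun j => v j x t *
  (deriv rhoh (phi x t) * Dd (Some j) phi x t * sqnormV v x t / 2
   + rhoh (phi x t) * sumI (fun i => 2 * v i x t * Dd (Some j) (v i) x t) / 2
   + (sumI (fun k => dx k GF (fun k => dx k phi x t) (phi x t) * Dd (Some j) (dx k phi) x t)
      + dt GF (fun k => dx k phi x t) (phi x t) * Dd (Some j) phi x t))).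
  rewrite /adv; apply: sumI_ext => j; by rewrite Ej.
split.
- rewrite /dissip_lhs /dissip_rate E0 Adv Sdiv Pdiv Mdiv.
  exact: (@alg d (fun i => v i x t) (fun i => dt (v i) x t) (fun i j => dx j (v i) x t)
    (dt phi x t) (fun k => dx k phi x t) (fun k => dt (dx k phi) x t)
    (fun k => dx k (dt phi) x t) (fun k j => dx j (dx k phi) x t)
    (fun k => xi f phi k x t) (fun j i => dx i (xi f phi j) x t)
    (p x t) (fun i => dx i p x t) (mu x t) (fun i => dx i mu x t)
    (fun i => dx i (fun y s => m (phi y s) * dx i mu y s) x t)
    (fun i j => dx j (fun y s => 2 * eta (phi y s) * symgrad v i j y s) x t)
    (rhoh (phi x t)) (deriv rhoh (phi x t)) (eta (phi x t))
    (m (phi x t)) (deriv rhoc (phi x t)) (df_dz f (phi x t) (gradAt phi x t))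
    (sqnormV v x t) erefl Hsch Hsym Hxs Mom' Hinc Hph' Hch').
- rewrite /dissip_rate.
  have h1 : 0 <= sqnormM (symgrad v) x t.
    apply: sumI_nonneg => i; apply: sumI_nonneg => j; exact: pow2_ge_0.
  have h2 : 0 <= sqnormV (grad mu) x t.
    apply: sumI_nonneg => i; exact: pow2_ge_0.
  have := Heta (phi x t); have := Hmpos (phi x t).
  nra.
Qed.
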